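(* Let $f\colon M\to G$ be an epimorphism in the category $\mathbf{TGr}$ of Hausdorff topological groups and continuous homomorphisms, and let $H$ be the closure of the subgroup $f(M)$ in $G$. If any one of the following conditions holds, then $f(M)$ is dense in $G$: (1) the right uniformity $\mathcal U_r$ on the coset space $G/H$ is non-archimedean; (2) $G$ is a non-archimedean topological group; (3) $H$ is open in $G$.
   Context: A morphism $f\colon M\to G$ in $\mathbf{TGr}$ is an epimorphism if there is no pair of distinct continuous homomorphisms $g,h\colon G\to P$ into a Hausdorff topological group $P$ with $g\circ f=h\circ f$. A topological group is non-archimedean if it has a local base at the identity consisting of open subgroups. For a closed subgroup $H$ of $G$, the right uniformity $\mathcal U_r$ on the left coset space $G/H$ is the uniformity with base the entourages $\tilde U=\{(aH,bH): bH\subseteq UaH\}$, $U$ ranging over the neighborhoods of the identity in $G$. A uniformity is non-archimedean if it has a base consisting of equivalence relations. *)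

(* Defs.v *)
From HB Require Import structures.
From mathcomp Require Import all_boot monoid.
From mathcomp Require Import all_classical topology.
Unset Printing Implicit Defensive.
Local Open Scope classical_set_scope.
Local Open Scope group_scope.

HB.mixin Record isTopologicalGroup G of Group G & Topological G := {
  mulg_continuous : continuous (fun p : G * G => p.1 * p.2);
  invg_continuous : continuous (fun x : G => x^-1)
}.

#[short(type="topGroupType")]
HB.structure Definition TopologicalGroup :=
  {G of isTopologicalGroup G & Group G & Topological G}.

Section Defs.
Context {G : topGroupType}.

Definition group_hom {P : topGroupType} (g : G -> P) : Prop :=
  forall x y, g (x * y) = g x * g y.

Definition is_subgroup (S : set G) : Prop :=
  S 1 /\ (forall x y, S x -> S y -> S (x * y)) /\ (forall x, S x -> S x^-1).

Definition nonarchimedean_group : Prop :=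
  forall U : set G, nbhs (1 : G) U ->
    exists V : set G, [/\ open V, is_subgroup V & V `<=` U].

Definition lcoset (H : set G) (a : G) : set G := [set a * h | h in H].
Definition coset_space (H : set G) := {A : set G | exists a, A = lcoset H a}.

Definition setmulg (U A : set G) : set G := [set u * x | u in U & x in A].

Definition right_entourage (H : set G) (U : set G) :
    set (coset_space H * coset_space H) :=
  [set p | sval p.2 `<=` setmulg U (sval p.1)].

Definition right_unif_entourage (H : set G)
    (E : set (coset_space H * coset_space H)) : Prop :=
  exists U : set G, nbhs (1 : G) U /\ right_entourage H U `<=` E.

Definition equivalence_rel {X : Type} (R : set (X * X)) : Prop :=
  [/\ (forall x, R (x, x)),
      (forall x y, R (x, y) -> R (y, x)) &
      (forall x y z, R (x, y) -> R (y, z) -> R (x, z))].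

Definition right_unif_nonarchimedean (H : set G) : Prop :=
  forall E, right_unif_entourage H E ->
    exists R, [/\ equivalence_rel R, right_unif_entourage H R & R `<=` E].

End Defs.

Definition TGr_epi (M G : topGroupType) (f : M -> G) : Prop :=
  forall (P : topGroupType) (g h : G -> P),
    hausdorff_space P ->
    continuous g -> group_hom g -> continuous h -> group_hom h ->
    (forall x, g (f x) = h (f x)) -> g = h.

(* Main.v *)
From HB Require Import structures.
From mathcomp Require Import all_boot monoid.
From mathcomp Require Import all_classical topology.
Require Import Defs.
From Stdlib Require List.
Set Implicit Arguments.
Unset Strict Implicit.
Local Open Scope classical_set_scope.
Local Open Scope group_scope.

Section Sym.
Variable T : Type.
Record perm := Perm { pfun : T -> T; pinv : T -> T;
  pK : cancel pfun pinv; pKV : cancel pinv pfun }.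

Lemma perm_ext (s t : perm) : pfun s = pfun t -> s = t.
Proof.
case: s => f g K KV; case: t => f' g' K' KV' /= E; subst f'.
have E : g = g'.
  apply: funext => x; by rewrite -{1}(KV' x) K.
subst g'; congr Perm; exact: Prop_irrelevance.
Qed.

HB.instance Definition _ := gen_eqMixin perm.
HB.instance Definition _ := gen_choiceMixin perm.

Definition perm1 : perm := @Perm id id (fun _ => erefl) (fun _ => erefl).
Definition permM (s t : perm) : perm.
Proof.
refine (@Perm (pfun s \o pfun t) (pinv t \o pinv s) _ _).
- by move=> x /=; rewrite pK pK.
- by move=> x /=; rewrite pKV pKV.
Defined.
Definition permV (s : perm) : perm := @Perm (pinv s) (pfun s) (pKV s) (pK s).

Lemma permMA : associative permM.
Proof. by move=> a b c; apply: perm_ext. Qed.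
Lemma perm1M : left_id perm1 permM.
Proof. by move=> a; apply: perm_ext. Qed.
Lemma permM1 : right_id perm1 permM.
Proof. by move=> a; apply: perm_ext. Qed.
Lemma permVM : left_inverse perm1 permV permM.
Proof. by move=> a; apply: perm_ext; apply: funext => x /=; rewrite pK. Qed.
Lemma permMV : right_inverse perm1 permV permM.
Proof. by move=> a; apply: perm_ext; apply: funext => x /=; rewrite pKV. Qed.

HB.instance Definition _ := isGroup.Build perm permMA perm1M permM1 permVM permMV.

Definition basic (s : perm) (F : seq T) : set perm :=
  [set t | forall p, List.In p F -> pfun t p = pfun s p].

Definition pnbhs (s : perm) (A : set perm) := exists F, basic s F `<=` A.

HB.instance Definition _ := hasNbhs.Build perm pnbhs.

Lemma pnbhs_filter s : ProperFilter (pnbhs s).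
Proof.
apply: Build_ProperFilter_ex.
  by move=> A [F sFA]; exists s; apply: sFA.
split.
- by exists [::].
- move=> A B [F1 s1] [F2 s2]; exists (F1 ++ F2) => t Ht; split.
    by apply: s1 => p Hp; apply: Ht; apply: List.in_or_app; left.
  by apply: s2 => p Hp; apply: Ht; apply: List.in_or_app; right.
- by move=> A B sAB [F sF]; exists F; apply: subset_trans sAB.
Qed.

Lemma pnbhs_singleton s A : pnbhs s A -> A s.
Proof. by move=> [F sF]; apply: sF. Qed.

Lemma pnbhs_nbhs s A : pnbhs s A -> pnbhs s (pnbhs^~ A).
Proof.
move=> [F sF]; exists F => t Ht; exists F => u Hu; apply: sF => p Hp.
by rewrite Hu // Ht.
Qed.

HB.instance Definition _ := Nbhs_isNbhsTopological.Build perm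
  pnbhs_filter pnbhs_singleton pnbhs_nbhs.

Lemma perm_mul_cont : continuous (fun p : perm * perm => p.1 * p.2).
Proof.
move=> [s t] A /= [F sF].
exists (basic s (map (pfun t) F), basic t F).
  by split; [exists (map (pfun t) F) | exists F].
move=> [s' t'] [/= Hs Ht]; apply: sF => p Hp /=.
rewrite /= Ht //; apply: Hs; exact: List.in_map.
Qed.

Lemma perm_inv_cont : continuous (fun x : perm => x^-1).
Proof.
move=> s A /= [F sF]; exists (map (pinv s) F) => t Ht; apply: sF => p Hp /=.
have := Ht _ (List.in_map _ _ _ Hp); rewrite pKV => E.
by rewrite -{1}E pK.
Qed.

HB.instance Definition _ := isTopologicalGroup.Build perm perm_mul_cont perm_inv_cont.

Lemma perm_hausdorff : hausdorff_space perm.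
Proof.
move=> s t Hc; apply: perm_ext; apply: funext => p.
have [u [Hu1 Hu2]] := Hc (basic s [:: p]) (basic t [:: p])
   (ex_intro _ [:: p] (fun _ h => h)) (ex_intro _ [:: p] (fun _ h => h)).
by rewrite -(Hu1 p) ?(Hu2 p) //=; left.
Qed.
End Sym.
Arguments pfun {T}.
Arguments pinv {T}.

Lemma sig_ext (X : Type) (P : X -> Prop) (a b : {x | P x}) : sval a = sval b -> a = b.
Proof. case: a => x px; case: b => y py /= E; subst y; congr exist; exact: Prop_irrelevance. Qed.

Lemma cont_mulL (P : topGroupType) (X : topologicalType) (k : X -> P) (c : P) :
  continuous k -> continuous (fun x => c * k x).
Proof.
move=> kc x.
apply: (@cvg_comp _ _ _ (fun x => (c, k x)) (fun p : P * P => p.1 * p.2) _ (nbhs (c, k x))).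
  by apply: cvg_pair; [exact: cvg_cst | exact: kc].
exact: (@mulg_continuous P (c, k x)).
Qed.

Lemma cont_mulR (P : topGroupType) (X : topologicalType) (k : X -> P) (c : P) :
  continuous k -> continuous (fun x => k x * c).
Proof.
move=> kc x.
apply: (@cvg_comp _ _ _ (fun x => (k x, c)) (fun p : P * P => p.1 * p.2) _ (nbhs (k x, c))).
  by apply: cvg_pair; [exact: kc | exact: cvg_cst].
exact: (@mulg_continuous P (k x, c)).
Qed.

Lemma cont_nbhs (X Y : topologicalType) (k : X -> Y) x (A : set Y) :
  continuous k -> nbhs (k x) A -> nbhs x (k @^-1` A).
Proof. by move=> kc HA; apply: kc. Qed.

Section Core.
Variable G : topGroupType.
Variables (V S : set G) (a : G).
Hypothesis Vopen : open V.
Hypothesis Vsub : is_subgroup V.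
Hypothesis Ssub : is_subgroup S.
Hypothesis aout : forall v s, V v -> S s -> a <> v * s.

Definition rc (y : G) : set G := [set v * y | v in V].
Definition rmul (A : set G) (x : G) : set G := [set z * x | z in A].

Lemma rmul_rc y x : rmul (rc y) x = rc (y * x).
Proof.
apply/seteqP; split => z.
  by case=> _ [v Vv <-] <-; exists v => //; rewrite mulgA.
by case=> v Vv <-; exists (v * y); [exists v|rewrite mulgA].
Qed.

Lemma rmulM A x y : rmul (rmul A x) y = rmul A (x * y).
Proof.
apply/seteqP; split => z.
  by case=> _ [w Aw <-] <-; exists w => //; rewrite mulgA.
by case=> w Aw <-; exists (w * x); [exists w|rewrite mulgA].
Qed.

Lemma rmul1 A : rmul A 1 = A.
Proof.
apply/seteqP; split => z; first by case=> w Aw <-; rewrite mulg1.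
by move=> Az; exists z => //; rewrite mulg1.
Qed.

Definition T0 := {A : set G | exists y, A = rc y}.

Lemma act_ex (A : T0) x : exists y, rmul (sval A) x = rc y.
Proof. by case: A => /= A [y ->]; exists (y * x); exact: rmul_rc. Qed.

Definition act x (A : T0) : T0 := exist _ (rmul (sval A) x^-1) (act_ex A x^-1).

Lemma actM x y A : act (x * y) A = act x (act y A).
Proof. by apply: sig_ext => /=; rewrite rmulM invgM. Qed.

Lemma act1 A : act 1 A = A.
Proof. by apply: sig_ext => /=; rewrite invg1 rmul1. Qed.

Lemma actK x A : act x^-1 (act x A) = A.
Proof. by rewrite -actM mulVg act1. Qed.
Lemma actKV x A : act x (act x^-1 A) = A.
Proof. by rewrite -actM mulgV act1. Qed.

Definition Tt := (T0 * bool)%type.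
Definition gf x (p : Tt) : Tt := (act x p.1, p.2).
Lemma gfK x : cancel (gf x) (gf x^-1).
Proof. by case=> A b; rewrite /gf /= actK. Qed.
Lemma gfKV x : cancel (gf x^-1) (gf x).
Proof. by case=> A b; rewrite /gf /= actKV. Qed.

Definition gperm x : perm Tt := @Perm Tt (gf x) (gf x^-1) (gfK x) (gfKV x).

Definition q (A : T0) : bool := `[< sval A `&` S !=set0 >].
Definition tf (p : Tt) : Tt := (p.1, p.2 (+) q p.1).
Lemma tfK : cancel tf tf.
Proof. by case=> A b; rewrite /tf /= addbK. Qed.
Definition tau : perm Tt := @Perm Tt tf tf tfK tfK.

Definition gh x : perm Tt := tau * gperm x * tau.

Lemma gperm_hom : group_hom gperm.
Proof.
move=> x y; apply: perm_ext; apply: funext => -[A b] /=.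
by rewrite /gf /= actM.
Qed.

Lemma gh_hom : group_hom gh.
Proof.
move=> x y; apply: perm_ext; apply: funext => p /=.
by rewrite tfK /gf /= actM.
Qed.

Lemma Sinv x : S x -> S x^-1.
Proof. by case: Ssub => _ [_]; apply. Qed.
Lemma SM x y : S x -> S y -> S (x * y).
Proof. by case: Ssub => _ [+ _]; apply. Qed.

Lemma q_act x A : S x -> q (act x A) = q A.
Proof.
move=> Sx; rewrite /q; apply/asboolP/asboolP.
  case=> w [[z Az Ew] Sz]; exists z; split => //.
  rewrite -(mulgK x^-1 z) Ew; apply: SM => //; rewrite invgK //.
case=> z [Az Sz]; exists (z * x^-1); split; first by exists z.
by apply: SM => //; apply: Sinv.
Qed.

Lemma agree x : S x -> gh x = gperm x.
Proof.
move=> Sx; apply: perm_ext; apply: funext => -[A b] /=.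
by rewrite /tf /gf /= q_act // addbK.
Qed.

Lemma V1 : V 1. Proof. by case: Vsub. Qed.
Lemma VM x y : V x -> V y -> V (x * y).
Proof. by case: Vsub => _ [+ _]; apply. Qed.
Lemma Vinv x : V x -> V x^-1.
Proof. by case: Vsub => _ [_]; apply. Qed.

Definition V0 : T0 := exist _ (rc 1) (ex_intro _ 1 erefl).

Lemma differ : gh a^-1 <> gperm a^-1.
Proof.
move=> E.
have := congr1 (fun s : perm Tt => pfun s (V0, false)) E => /=.
rewrite /tf /gf /=.
have -> : q V0 = true.
  apply/asboolP; exists (1 * 1); split; first by exists 1 => //; exact: V1.
  by rewrite mulg1; case: Ssub.
have -> : q (act a^-1 V0) = false.
  apply/asboolP => -[z [[w [v Vv Ew] Ez] Sz]].
  have := aout (Vinv Vv) Sz; apply.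
  by rewrite -Ez -Ew invgK mulg1 mulgA mulVg mul1g.
by [].
Qed.

Lemma rc_eq u w : V (u * w^-1) -> rc u = rc w.
Proof.
move=> Vuw; apply/seteqP; split => z.
  case=> v Vv <-; exists (v * (u * w^-1)); first exact: VM.
  by rewrite -!mulgA mulVg mulg1.
case=> v Vv <-; exists (v * (u * w^-1)^-1); first by apply: VM => //; exact: Vinv.
by rewrite invgM invgK -!mulgA mulVg mulg1.
Qed.

Lemma near_agree1 (p : Tt) x0 : nbhs x0 [set x | gf x p = gf x0 p].
Proof.
case: p => -[A0 [y EA]] b.
pose phi := fun x : G => y * x^-1 * (y * x0^-1)^-1.
have phic : continuous phi.
  apply: cont_mulR; apply: cont_mulL; exact: invg_continuous.
have HV : nbhs (phi x0) V.
  rewrite /phi mulgV; apply: open_nbhs_nbhs; split => //; exact: V1.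
apply: filterS (cont_nbhs phic HV) => x /= Vx.
rewrite /gf /=; congr pair; apply: sig_ext => /=.
by subst A0; rewrite !rmul_rc; apply: rc_eq.
Qed.

Lemma near_agree (F : seq Tt) x0 :
  nbhs x0 [set x | forall p, List.In p F -> gf x p = gf x0 p].
Proof.
elim: F => [|p F IH].
  by apply: (@filterS _ _ _ setT); [move=> x _ p [] | exact: filterT].
apply: filterS (filterI (near_agree1 p x0) IH) => x [H1 H2] r Hr.
case: Hr => [E|Hr]; first by rewrite -E.
exact: H2.
Qed.

Lemma gperm_cont : continuous gperm.
Proof.
move=> x0 B [F sF]; apply: filterS (near_agree F x0) => x Hx.
by apply: sF => p Hp /=; apply: Hx.
Qed.

Lemma gh_cont : continuous gh.
Proof. exact: (cont_mulR (cont_mulL gperm_cont)). Qed.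

Lemma core_false (M : topGroupType) (f : M -> G) :
  TGr_epi M G f -> (forall m, S (f m)) -> False.
Proof.
move=> epi Sf; apply: differ.
have E := epi _ gh gperm (@perm_hausdorff _) gh_cont gh_hom gperm_cont gperm_hom
  (fun m => agree (Sf m)).
by rewrite E.
Qed.

End Core.

Unset Implicit Arguments.
Set Strict Implicit.
Lemma closure_subgroup (G : topGroupType) (S : set G) :
  is_subgroup S -> is_subgroup (closure S).
Proof.
move=> [S1 [SM SV]]; split; first exact: subset_closure.
split.
- move=> x y Hx Hy B HB.
  have := @mulg_continuous G (x, y) B HB.
  case=> -[P1 P2] [/= N1 N2] sP.
  have [s [Ss Ps]] := Hx _ N1.
  have [t [St Pt]] := Hy _ N2.
  exists (s * t); split; first exact: SM.
  by have := sP (s, t); apply; split.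
- move=> x Hx B HB.
  have N := @invg_continuous G x B HB.
  have [s [Ss Ps]] := Hx _ N.
  by exists s^-1; split => //; apply: SV.
Qed.

Theorem theorem7p8 (M G : topGroupType) (f : M -> G) :
  hausdorff_space M -> hausdorff_space G ->
  continuous f -> group_hom f -> TGr_epi M G f ->
  let H := closure (range f) in
  right_unif_nonarchimedean H \/ nonarchimedean_group (G:=G) \/ open H ->
  dense (range f).
Proof.
move=> hM hG fc fhom epi H cond.
have f1 : f 1 = 1.
  by apply: (@mulgI _ (f 1)); rewrite -fhom !mulg1.
have Ssub : is_subgroup (range f).
  split; first by exists 1.
  split.
    by move=> _ _ [x _ <-] [y _ <-]; exists (x * y) => //; rewrite fhom.
  move=> _ [x _ <-]; exists x^-1 => //.
  by apply: (@mulgI _ (f x)); rewrite -fhom !mulgV f1.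
have [//|nd] := pselect (dense (range f)); exfalso.
have [O [[a Oa] OS]] := denseNE nd.
have aout0 : ~ H a.
  move=> Ha; have := Ha O (open_nbhs_nbhs Oa); rewrite setIC OS.
  by case=> z [].
suff [V [Vo Vs Vout]] : exists V : set G, [/\ open V, is_subgroup V &
    forall v h, V v -> H h -> a <> v * h].
  apply: (core_false Vo Vs Ssub _ epi) => [v s Vv Ss|m]; last by exists m.
  by apply: Vout => //; apply: subset_closure.
have [U' [U'n U'a]] : exists U' : set G, nbhs 1 U' /\
    forall u h, U' u -> H h -> a <> u * h.
  pose phi := fun u : G => u^-1 * a.
  have phic : continuous phi by apply: cont_mulR; exact: invg_continuous.
  have Hn : nbhs (phi 1) (~` H).
    apply: open_nbhs_nbhs; split; first by apply: closed_openC; exact: closed_closure.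
    by rewrite /phi invg1 mul1g.
  exists (phi @^-1` (~` H)); split; first exact: cont_nbhs phic Hn.
  by move=> u h Uu Hh E; apply: Uu; rewrite /phi E mulKg.
case: cond => [C1|[C2|C3]].
- have [R [[Rr Rs Rt] [U [Un UR]] RE]] :=
    C1 (right_entourage H U') (ex_intro _ U' (conj U'n (@subset_refl _ _))).
  pose pt := fun y : G =>
    (exist _ (lcoset H y) (ex_intro _ y erefl) : coset_space H).
  pose V := [set x : G | forall y, R (pt y, pt (x * y))].
  have UV : U `<=` V.
    move=> u Uu y; apply: UR => /= z [h Hh <-].
    exists u => //; exists (y * h); [by exists h | by rewrite mulgA].
  have Vs : is_subgroup V.
    split; first by move=> y; rewrite mul1g; exact: Rr.
    split.
    - move=> x1 x2 V1 V2 y; rewrite -mulgA; exact: Rt (V2 y) (V1 _).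
    - move=> x Vx y; apply: Rs; have := Vx (x^-1 * y); by rewrite mulVKg.
  have Vo : open V.
    rewrite openE => v Vv.
    pose psi := fun x : G => v^-1 * x.
    have idc : continuous (fun x : G => x) by move=> x ?.
    have psic : continuous psi by apply: cont_mulL.
    have Hn : nbhs (psi v) U by rewrite /psi mulVg.
    apply: filterS (cont_nbhs psic Hn) => x /= Ux.
    case: Vs => _ [VM _]; have := VM _ _ Vv (UV _ Ux).
    by rewrite /psi mulVKg.
  exists V; split => // v h Vv Hh E.
  have := RE _ (Vv 1) (v * 1 * h).
  have Hl : lcoset H (v * 1) (v * 1 * h) by exists h.
  case/(_ Hl) => u Uu [w [h' Hh' Ew] Euw].
  apply: (U'a u h' Uu Hh'); by rewrite E -(mul1g h') Ew Euw mulg1.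
- have [V [Vo Vs VU]] := C2 U' U'n.
  exists V; split => // v h Vv Hh; exact: U'a (VU _ Vv) Hh.
- have Hs := @closure_subgroup G _ Ssub.
  exists H; split => // v h Hv Hh E; apply: aout0; rewrite E.
  by case: Hs => _ [+ _]; apply.
Qed.
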